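(* (a) If $\mathbf b=(b_1,\dots,b_{k-1})$ is a perfect matching sequence, then $b_v\le v(k-v)$ for every $v=1,\dots,k-1$. (b) For every $1\le v\le k-1$, the sequence $$\mathbf b=(1,2,\dots,v-2,v-1,\ v(k-v),\ k-v-1,k-v-2,\dots,2,1)$$ (i.e. $b_i=i$ for $i<v$, $b_v=v(k-v)$, $b_i=k-i$ for $i>v$) is a perfect matching sequence.
   Context: Fix an integer $k\ge 2$. For a sequence $\mathbf b=(b_1,\dots,b_{k-1})$ of non-negative integers write $|\mathbf b|=\sum_i b_i$. The bipartite graph $\mathcal B_{\mathbf b}$ has upper vertex class $U=\{(j,l):1\le j\le l\le k-1\}$ and lower vertex class $D_{\mathbf b}=\{(i,t):1\le i\le k-1,\ 1\le t\le b_i\}$, with an edge between $(j,l)\in U$ and $(i,t)\in D_{\mathbf b}$ if and only if $j\le i\le l$. The sequence $\mathbf b$ is a matching sequence if $\mathcal B_{\mathbf b}$ has a matching covering all of $D_{\mathbf b}$, and a perfect matching sequence if moreover $|\mathbf b|=\binom k2$. *)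

(* Defs.v *)
From mathcomp Require Import all_boot.
Set Implicit Arguments. Unset Strict Implicit. Unset Printing Implicit Defensive.

(* A sequence b = (b_1,...,b_{k-1}) is represented as b : nat -> nat;
   only the values b 1, ..., b (k-1) are relevant. *)

Definition inU (k : nat) (u : nat * nat) : bool :=
  [&& 1 <= u.1, u.1 <= u.2 & u.2 <= k - 1].

Definition inD (k : nat) (b : nat -> nat) (d : nat * nat) : bool :=
  [&& 1 <= d.1, d.1 <= k - 1, 1 <= d.2 & d.2 <= b d.1].

Definition edgeB (u d : nat * nat) : bool := (u.1 <= d.1) && (d.1 <= u.2).

(* A matching covering all of D_b: an injective assignment of each lower
   vertex to an adjacent upper vertex. *)
Definition matching_seq (k : nat) (b : nat -> nat) : Prop :=
  exists f : nat * nat -> nat * nat,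
    (forall d, inD k b d -> inU k (f d) /\ edgeB (f d) d) /\
    (forall d d', inD k b d -> inD k b d' -> f d = f d' -> d = d').

Definition size_seq (k : nat) (b : nat -> nat) : nat := \sum_(1 <= i < k) b i.

Definition perfect_matching_seq (k : nat) (b : nat -> nat) : Prop :=
  matching_seq k b /\ size_seq k b = 'C(k, 2).

(* Main.v *)
Require Import Defs.
From mathcomp Require Import all_boot.
From mathcomp Require Import zify.

Lemma code_inj (m a c a' c' : nat) : c < m -> c' < m ->
  a * m + c = a' * m + c' -> a = a' /\ c = c'.
Proof.
move=> hc hc' e.
have ha : (a * m + c) %/ m = a by rewrite divnMDl ?divn_small ?addn0 //; lia.
have ha' : (a' * m + c') %/ m = a' by rewrite divnMDl ?divn_small ?addn0 //; lia.
have eaa : a = a' by rewrite -ha -ha' e.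
split => //; subst; lia.
Qed.

Lemma sum_id (n : nat) : \sum_(1 <= i < n) i = 'C(n, 2).
Proof.
elim: n => [|n IH]; first by rewrite big_geq.
case: n IH => [|n] IH; first by rewrite big_geq.
by rewrite big_nat_recr //= IH [in RHS]binS bin1 addnC.
Qed.

Lemma bin2D (a b : nat) : 'C(a + b, 2) = 'C(a, 2) + a * b + 'C(b, 2).
Proof.
elim: b => [|b IH]; first by rewrite addn0 muln0 bin0n !addn0.
rewrite addnS binS bin1 IH [in RHS]binS bin1 mulnS; lia.
Qed.

Lemma sum_rev (n a : nat) : \sum_(a <= i < a + n) (a + n - i) = 'C(n.+1, 2).
Proof.
elim: n a => [|n IH] a; first by rewrite addn0 big_geq.
rewrite addnS big_nat_recl; last lia.

rewrite IH [in RHS]binS bin1; lia.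
Qed.

Theorem mainTheorem8 (k : nat) (hk : 2 <= k) :
  (forall b : nat -> nat, perfect_matching_seq k b ->
     forall v : nat, 1 <= v <= k - 1 -> b v <= v * (k - v)) /\
  (forall v : nat, 1 <= v <= k - 1 ->
     perfect_matching_seq k
       (fun i => if i < v then i else if i == v then v * (k - v) else k - i)).
Proof.
split.
- move=> b [[f [Hf Hinj]] _] v /andP[v1 vk].
  pose code (t : 'I_(b v)) := ((f (v, t.+1)).1 - 1) * (k - v) + ((f (v, t.+1)).2 - v).
  have inDt : forall t : 'I_(b v), inD k b (v, t.+1).
    by move=> t; rewrite /inD /= v1 vk ltn_ord.
  have codeP : forall t : 'I_(b v), code t < v * (k - v).
    move=> t; have [] := Hf _ (inDt t).
    rewrite /inU /edgeB /code /=.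
    case: (f (v, t.+1)) => j l /= /and3P[h1 h2 h3] /andP[h4 h5].
    have : (j - 1) * (k - v) <= (v - 1) * (k - v) by rewrite leq_mul2r; lia.
    have : v * (k - v) = (v - 1) * (k - v) + (k - v) by rewrite -{1}(subnK v1) mulnDl mul1n.
    lia.
  pose g (t : 'I_(b v)) : 'I_(v * (k - v)) := Ordinal (codeP t).
  have := @leq_card _ _ g; rewrite !card_ord; apply => t t' /(congr1 val) /= e.
  have [] := Hf _ (inDt t); have [] := Hf _ (inDt t').
  move: e; rewrite /code /inU /edgeB.
  have := Hinj _ _ (inDt t) (inDt t').
  case: (f (v, t.+1)) => j l; case: (f (v, t'.+1)) => j' l' /= H e
    /and3P[h1 h2 h3] /andP[h4 h5] /and3P[h1' h2' h3'] /andP[h4' h5'].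
  have [ea ec] := code_inj (k - v) (j - 1) (l - v) (j' - 1) (l' - v) ltac:(lia) ltac:(lia) e.
  have : (v, t.+1) = (v, t'.+1) by apply: H; congr pair; lia.
  by case=> /val_inj.
- move=> v /andP[v1 vk]; split.
  + exists (fun d => if d.1 < v then (d.2, d.1)
      else if d.1 == v then ((d.2 - 1) %/ (k - v) + 1, v + (d.2 - 1) %% (k - v))
      else (d.1, k - d.2)).
    have kv : 0 < k - v by lia.
    split.
    * case=> i t; rewrite /inD /inU /edgeB /=.
      case: (ltnP i v) => hiv.
        by move=> /and4P[hi1 hi2 ht1 ht2]; split => /=; repeat (apply/andP; split); lia.
      case: (eqVneq i v) => [eiv|hne] /and4P[hi1 hi2 ht1 ht2].
      - subst i.
        have h1 : (t - 1) %/ (k - v) < v by rewrite ltn_divLR //; lia.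
        have h2 : (t - 1) %% (k - v) < k - v by rewrite ltn_mod.
        move: h1 h2; set q := (t - 1) %/ _; set r := (t - 1) %% _ => h1 h2.
        by split => /=; repeat (apply/andP; split); lia.
      - by split => /=; repeat (apply/andP; split); lia.
    * case=> i t; case=> i' t'; rewrite /inD /=.
      move=> /and4P[hi1 hi2 ht1 ht2] /and4P[hi1' hi2' ht1' ht2'].
      have dt := divn_eq (t - 1) (k - v).
      have dt' := divn_eq (t' - 1) (k - v).
      move: ht2 ht2' dt dt'.
      set q := (t - 1) %/ _; set r := (t - 1) %% _.
      set q' := (t' - 1) %/ _; set r' := (t' - 1) %% _.
      have hq : t <= v * (k - v) -> q < v by move=> ?; rewrite ltn_divLR //; lia.
      have hq' : t' <= v * (k - v) -> q' < v by move=> ?; rewrite ltn_divLR //; lia.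
      have hr : r < k - v by rewrite ltn_mod.
      have hr' : r' < k - v by rewrite ltn_mod.
      case: (ltnP i v) => hiv; case: (ltnP i' v) => hiv';
      case: (eqVneq i v) => eiv; case: (eqVneq i' v) => eiv' //=;
      move=> ht2 ht2' dt dt' [] ea eb; try (congr pair; lia); try (exfalso; lia).
  + rewrite /size_seq (big_cat_nat (n:=v)) //=; last lia.
    rewrite [X in _ + X]big_ltn; last lia.
    rewrite ltnn eqxx.
    rewrite (eq_big_nat _ _ (F2 := fun i => i)); last by move=> i /andP[_ ->].
    rewrite sum_id.
    rewrite (eq_big_nat _ _ (F2 := fun i => k - i)); last first.
      by move=> i /andP[h1 h2]; rewrite ltnNge ltnW //= gtn_eqF.
    have e1 : k = v.+1 + (k - v - 1) by lia.
    rewrite [X in \sum_(_ <= _ < X) _]e1 (eq_big_nat _ _ (F2 := fun i => v.+1 + (k - v - 1) - i)); last by move=> i _; rewrite -e1.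
    rewrite sum_rev.
    have -> : (k - v - 1).+1 = k - v by lia.
    by rewrite addnA -bin2D subnKC //; lia.
Qed.
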